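(* Let $\ell\ge1$, $N=2^\ell$, $n_c,n_v\ge1$, and let ${\mathbf x}_{h,u}\in\mathbb{F}_2^\ell$ for $h\in\{0,\dots,n_c-1\}$, $u\in\{0,\dots,n_v-1\}$. Let $H$ be the $n_cN\times n_vN$ block matrix whose $(h,u)$ block is $P_{{\mathbf x}_{h,u}}$. For $0\le h<i\le n_c-1$ and ${\boldsymbol\alpha}\in\mathbb{F}_2^\ell$, let $\rho_{h,i}({\boldsymbol\alpha})=|\{u\in\{0,\dots,n_v-1\}: {\mathbf x}_{h,u}+{\mathbf x}_{i,u}={\boldsymbol\alpha}\}|$ (the multiplicity of ${\boldsymbol\alpha}$ in the multiset $A_{h,i}=\{{\mathbf x}_{h,u}+{\mathbf x}_{i,u}: u\}$). Then the number of $4$-cycles in the Tanner graph of $H$ is $$\mathcal{N}_4=2^\ell\sum_{0\le h<i\le n_c-1}\ \sum_{{\boldsymbol\alpha}\in\mathbb{F}_2^\ell}\binom{\rho_{h,i}({\boldsymbol\alpha})}{2}.$$ Consequently, the Tanner graph of $H$ has girth greater than $4$ if and only if, for every $h<i$, the elements ${\mathbf x}_{h,u}+{\mathbf x}_{i,u}$, $u=0,\dots,n_v-1$, are pairwise distinct.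
   Context: Rows and columns of $N\times N$ binary matrices are indexed by $\mathbb{F}_2^\ell$ via ${\mathbf x}=(x_1,\dots,x_\ell)\leftrightarrow 1+\sum_i x_i2^{i-1}$. For ${\mathbf a}\in\mathbb{F}_2^\ell$, $P_{\mathbf a}$ is the $N\times N$ binary matrix with $(P_{\mathbf a})_{{\mathbf x},{\mathbf y}}=1$ iff ${\mathbf y}={\mathbf x}+{\mathbf a}$ (dyadic permutation matrix). The Tanner graph of a binary matrix is the bipartite graph with check nodes = rows, variable nodes = columns, and edges at the $1$-entries. A $k$-cycle is a closed walk of $k$ edges with distinct vertices and edges; the girth is the length of a shortest cycle. *)

(* Defs.v *)
From HB Require Import structures.
From mathcomp Require Import all_boot all_order all_algebra.
Set Implicit Arguments. Unset Strict Implicit. Unset Printing Implicit Defensive.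
Import GRing.Theory.
Local Open Scope ring_scope.

Definition dyadic_perm (l : nat) (a : 'rV['F_2]_l) (x y : 'rV['F_2]_l) : bool :=
  y == x + a.

(* The block matrix H whose (h,u) block is P_{X h u}; rows indexed by
   (block row h, position x in F_2^l), columns by (block column u, position y). *)
Definition block_dyadic (l nc nv : nat) (X : 'I_nc -> 'I_nv -> 'rV['F_2]_l)
  (r : 'I_nc * 'rV['F_2]_l) (c : 'I_nv * 'rV['F_2]_l) : bool :=
  dyadic_perm (X r.1 c.1) r.2 c.2.

(* Tanner graph of a binary matrix with row index set R and column index set C:
   vertices are check nodes (inl r) and variable nodes (inr c). *)
Definition tanner_adj (R C : finType) (H : R -> C -> bool) : rel (R + C)%type :=
  fun a b => match a, b with
             | inl r, inr c => H r c
             | inr c, inl r => H r c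
             | _, _ => false
             end.

Section Cycles.
Variable T : finType.
Variable e : rel T.

Definition cyc_edge (k : nat) (w : {ffun 'I_k -> T}) (i : 'I_k) : {set T} :=
  [set w i; w (ordS i)].

Definition is_cycle (k : nat) (w : {ffun 'I_k -> T}) : bool :=
  [&& (0 < k)%N, injectiveb w, injectiveb (cyc_edge w)
    & [forall i, e (w i) (w (ordS i))]].

Definition cycle_edges (k : nat) (w : {ffun 'I_k -> T}) : {set {set T}} :=
  [set cyc_edge w i | i : 'I_k].

(* number of k-cycles (distinct cycles as subgraphs) *)
Definition num_cycles (k : nat) : nat :=
  #|[set cycle_edges w | w in [pred w : {ffun 'I_k -> T} | is_cycle w]]|.

(* girth > g : every cycle has length > g (vacuous if acyclic: girth = infinity) *)
Definition girth_gt (g : nat) : Prop :=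
  forall k (w : {ffun 'I_k -> T}), is_cycle w -> (g < k)%N.
End Cycles.

Definition rho (l nc nv : nat) (X : 'I_nc -> 'I_nv -> 'rV['F_2]_l)
  (h i : 'I_nc) (alpha : 'rV['F_2]_l) : nat :=
  #|[set u : 'I_nv | (X h u + X i u == alpha)%R]|.

(* Main.v *)
Require Import Defs.
From HB Require Import structures.
From mathcomp Require Import all_boot all_order all_algebra.
Import GRing.Theory.
Set Implicit Arguments. Unset Strict Implicit.

Section Gen.
Variable T : finType.
Variable e : rel T.

Definition o0 : 'I_4 := @Ordinal 4 0 isT.
Definition o1 : 'I_4 := @Ordinal 4 1 isT.
Definition o2 : 'I_4 := @Ordinal 4 2 isT.
Definition o3 : 'I_4 := @Ordinal 4 3 isT.

Lemma ord4_cases (i : 'I_4) : [\/ i = o0, i = o1, i = o2 | i = o3].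
Proof.
case: i => [[|[|[|[|m]]]] Hm].
- by apply: Or41; apply: val_inj.
- by apply: Or42; apply: val_inj.
- by apply: Or43; apply: val_inj.
- by apply: Or44; apply: val_inj.
- by [].
Qed.

Lemma enum4 : enum 'I_4 = [:: o0; o1; o2; o3].
Proof. by apply: (inj_map val_inj); rewrite val_enum_ord. Qed.

Lemma ordS0 : ordS o0 = o1. Proof. exact: val_inj. Qed.
Lemma ordS1 : ordS o1 = o2. Proof. exact: val_inj. Qed.
Lemma ordS2 : ordS o2 = o3. Proof. exact: val_inj. Qed.
Lemma ordS3 : ordS o3 = o0. Proof. exact: val_inj. Qed.

Lemma imset4 (U : finType) (f : 'I_4 -> U) :
  [set f i | i : 'I_4] = [set f o0; f o1; f o2; f o3].
Proof.
apply/setP => y; apply/imsetP/idP.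
- by case=> i _ ->; case: (ord4_cases i) => ->; rewrite !inE eqxx ?orbT.
- by rewrite !inE => /orP[/orP[/orP[|]|]|] /eqP ->; [exists o0|exists o1|exists o2|exists o3].
Qed.

Definition w4 (a p b q : T) : {ffun 'I_4 -> T} :=
  [ffun i : 'I_4 => nth a [:: a; p; b; q] i].

Definition E4 (a p b q : T) : {set {set T}} :=
  [set [set a; p]; [set p; b]; [set b; q]; [set q; a]].

Lemma injb4 (U : finType) (f : 'I_4 -> U) :
  injectiveb f = uniq [:: f o0; f o1; f o2; f o3].
Proof. rewrite /injectiveb /dinjectiveb.
have -> : enum (fintype_ordinal__canonical__fintype_Finite 4) = [:: o0; o1; o2; o3].
  by apply: (inj_map val_inj); have := val_enum_ord 4; rewrite /=.
by []. Qed.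

Lemma set2_neq (a b c d x : T) : x \in [set a; b] -> x \notin [set c; d] ->
  [set a; b] != [set c; d].
Proof. by move=> H1 H2; apply/eqP => E; rewrite E in H1; rewrite H1 in H2. Qed.

Lemma is_cycle4P (w : {ffun 'I_4 -> T}) :
  is_cycle e w ->
  [/\ uniq [:: w o0; w o1; w o2; w o3],
      [&& e (w o0) (w o1), e (w o1) (w o2), e (w o2) (w o3) & e (w o3) (w o0)]
    & cycle_edges w = E4 (w o0) (w o1) (w o2) (w o3)].
Proof.
case/and4P => _ Hw _ /forallP He; split.
- by rewrite -injb4.
- move: (He o0) (He o1) (He o2) (He o3). by rewrite ordS0 ordS1 ordS2 ordS3 => -> -> -> ->.
- by rewrite /cycle_edges imset4 /cyc_edge ordS0 ordS1 ordS2 ordS3.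
Qed.

Lemma w4_cycle (a p b q : T) :
  uniq [:: a; p; b; q] ->
  [&& e a p, e p b, e b q & e q a] ->
  is_cycle e (w4 a p b q) /\ cycle_edges (w4 a p b q) = E4 a p b q.
Proof.
move=> Hu He.
have Hv : [/\ w4 a p b q o0 = a, w4 a p b q o1 = p, w4 a p b q o2 = b
            & w4 a p b q o3 = q] by rewrite !ffunE.
case: Hv => H0 H1 H2 H3.
split; last by rewrite /cycle_edges imset4 /cyc_edge ordS0 ordS1 ordS2 ordS3 H0 H1 H2 H3.
apply/and4P; split => //.
- by rewrite injb4 H0 H1 H2 H3.
- move: Hu; rewrite injb4 /cyc_edge ordS0 ordS1 ordS2 ordS3 H0 H1 H2 H3 /=.
  rewrite !inE !negb_or -!andbA => Hu.
  case/and5P: Hu => ap ab aq pb /andP[pq /andP[bq _]].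
  have pa := ap; have ba := ab; have qa := aq; have bp := pb; have qp := pq; have qb := bq.
  rewrite eq_sym in pa; rewrite eq_sym in ba; rewrite eq_sym in qa; rewrite eq_sym in bp; rewrite eq_sym in qp; rewrite eq_sym in qb.
  have n1 : [set a; p] != [set p; b] by apply: (set2_neq (x:=a)); rewrite !inE ?eqxx ?orbT // ?negb_or ?ap ?ab ?aq ?pb ?pq ?bq ?pa ?ba ?qa ?bp ?qp ?qb.
  have n2 : [set a; p] != [set b; q] by apply: (set2_neq (x:=a)); rewrite !inE ?eqxx ?orbT // ?negb_or ?ap ?ab ?aq ?pb ?pq ?bq ?pa ?ba ?qa ?bp ?qp ?qb.
  have n3 : [set a; p] != [set q; a] by apply: (set2_neq (x:=p)); rewrite !inE ?eqxx ?orbT // ?negb_or ?ap ?ab ?aq ?pb ?pq ?bq ?pa ?ba ?qa ?bp ?qp ?qb.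
  have n4 : [set p; b] != [set b; q] by apply: (set2_neq (x:=p)); rewrite !inE ?eqxx ?orbT // ?negb_or ?ap ?ab ?aq ?pb ?pq ?bq ?pa ?ba ?qa ?bp ?qp ?qb.
  have n5 : [set p; b] != [set q; a] by apply: (set2_neq (x:=p)); rewrite !inE ?eqxx ?orbT // ?negb_or ?ap ?ab ?aq ?pb ?pq ?bq ?pa ?ba ?qa ?bp ?qp ?qb.
  have n6 : [set b; q] != [set q; a] by apply: (set2_neq (x:=b)); rewrite !inE ?eqxx ?orbT // ?negb_or ?ap ?ab ?aq ?pb ?pq ?bq ?pa ?ba ?qa ?bp ?qp ?qb.
  by rewrite n1 n2 n3 n4 n5 n6.
- apply/forallP => i; case: (ord4_cases i) => ->;
  rewrite ?ordS0 ?ordS1 ?ordS2 ?ordS3 ?H0 ?H1 ?H2 ?H3;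
  by case/and4P: He.
Qed.
End Gen.


Section Tanner.
Variables (l nc nv : nat) (X : 'I_nc -> 'I_nv -> 'rV['F_2]_l).
Local Notation V := 'rV['F_2]_l.
Local Notation T := (('I_nc * V) + ('I_nv * V))%type.
Local Notation e := (tanner_adj (block_dyadic X)).

Lemma addxx (v : V) : (v + v = 0)%R.
Proof. by apply/rowP => j; rewrite !mxE addrr_pchar2 // pchar_Fp. Qed.

Lemma addxxK (v w : V) : (v + w + w = v)%R.
Proof. by rewrite -addrA addxx addr0. Qed.

Definition K (a b p q : T) : {set {set T}} :=
  [set [set a; p]; [set a; q]; [set b; p]; [set b; q]].

Lemma set2C (a b : T) : [set a; b] = [set b; a].
Proof. exact: setUC. Qed.

Lemma KswapC a b p q : K a b p q = K b a p q.
Proof. by apply/setP => s; rewrite !inE; do !case: (_ == _). Qed.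
Lemma KswapV a b p q : K a b p q = K a b q p.
Proof. by apply/setP => s; rewrite !inE; do !case: (_ == _). Qed.
Lemma E4K a p b q : E4 a p b q = K a b p q.
Proof. by apply/setP => s; rewrite !inE (set2C p b) (set2C q a); do !case: (_ == _). Qed.
Lemma E4K' a p b q : E4 a p b q = K p q a b.
Proof. by apply/setP => s; rewrite !inE (set2C b q) (set2C a p); do !case: (_ == _). Qed.

Lemma memK c a b p q :
  (c \in \bigcup_(s in K a b p q) s) = [|| c == a, c == b, c == p | c == q].
Proof.
rewrite /K !bigcup_setU !big_set1 !inE.
by do !case: (_ == _).
Qed.

Definition Q : {set ('I_nc * 'I_nc) * ('I_nv * 'I_nv)} :=
  [set z : ('I_nc * 'I_nc) * ('I_nv * 'I_nv) | [&& z.1.1 < z.1.2, z.2.1 < z.2.2 &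
     (X z.1.1 z.2.1 + X z.1.2 z.2.1 == X z.1.1 z.2.2 + X z.1.2 z.2.2)%R]].

Definition fK (zx : ('I_nc * 'I_nc) * ('I_nv * 'I_nv) * V) : {set {set T}} :=
  let: (((h, i), (u, v)), x) := zx in
  K (inl (h, x)) (inl (i, x + X h u + X i u)%R) (inr (u, x + X h u)%R) (inr (v, x + X h v)%R).

Lemma key (h i : 'I_nc) (u v : 'I_nv) (x x' y y' : V) :
  h < i -> u < v ->
  y = (x + X h u)%R -> y = (x' + X i u)%R -> y' = (x + X h v)%R -> y' = (x' + X i v)%R ->
  ((h, i), (u, v)) \in Q /\
  K (inl (h, x)) (inl (i, x')) (inr (u, y)) (inr (v, y')) = fK (((h, i), (u, v)), x).
Proof.
move=> hi uv E1 E2 E3 E4.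
have Ex' : x' = (x + X h u + X i u)%R by rewrite -E1 E2 addxxK.
have Ex'' : x' = (x + X h v + X i v)%R by rewrite -E3 E4 addxxK.
split.
  rewrite inE /= hi uv /=; apply/eqP.
  by apply: (@addrI _ x); rewrite !addrA -Ex' -Ex''.
by rewrite /= -Ex' -E1 -E3.
Qed.


Definition P := setX Q [set: V].

Lemma key2 (h i : 'I_nc) (u v : 'I_nv) (x x' y y' : V) :
  inl (h, x) != inl (i, x') :> T -> inr (u, y) != inr (v, y') :> T ->
  y = (x + X h u)%R -> y = (x' + X i u)%R -> y' = (x + X h v)%R -> y' = (x' + X i v)%R ->
  K (inl (h, x)) (inl (i, x')) (inr (u, y)) (inr (v, y')) \in fK @: P.
Proof.
move=> nab npq E1 E2 E3 E4.
have hi : h != i.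
  apply/eqP=> hi; subst i; move: nab; suff -> : x = x' by rewrite eqxx.
  by apply: (@addIr _ (X h u)); rewrite -E1 -E2.
have uv : u != v.
  apply/eqP=> uv; subst v; move: npq; suff -> : y = y' by rewrite eqxx.
  by rewrite E1 E3.
have mem : forall z x0, z \in Q -> fK (z, x0) \in fK @: P.
  by move=> z x0 Hz; apply: imset_f; rewrite inE Hz in_setT.
case: (ltngtP h i) => [hi'|ih'|/val_inj hi']; last by rewrite hi' eqxx in hi.
- case: (ltngtP u v) => [uv'|vu'|/val_inj uv']; last by rewrite uv' eqxx in uv.
  + by case: (key hi' uv' E1 E2 E3 E4) => Hq ->; apply: mem.
  + by rewrite KswapV; case: (key hi' vu' E3 E4 E1 E2) => Hq ->; apply: mem.
- case: (ltngtP u v) => [uv'|vu'|/val_inj uv']; last by rewrite uv' eqxx in uv.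
  + by rewrite KswapC; case: (key ih' uv' E2 E1 E4 E3) => Hq ->; apply: mem.
  + by rewrite KswapC KswapV; case: (key ih' vu' E4 E3 E2 E1) => Hq ->; apply: mem.
Qed.

Definition Scyc := [set cycle_edges w | w in [pred w : {ffun 'I_4 -> T} | is_cycle e w]].

Lemma Scyc_sub : Scyc \subset fK @: P.
Proof.
apply/subsetP => s /imsetP [w Hw ->].
case: (is_cycle4P Hw) => + + ->.
move: (w o0) (w o1) (w o2) (w o3) => a p b q Hu He.
case: a Hu He => [[h x]|[u y]]; case: p => [[h' x2]|[u' y2]]; 
  case: b => [[i x']|[v y']]; case: q => [[i' x3]|[v' y3]] => //= Hu He;
  try by move: He; rewrite /= ?andbF.
- move: Hu; rewrite !in_cons !in_nil !orbF !negb_or /= => /and3P[nab npq _].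
  move: He; rewrite /block_dyadic /dyadic_perm /= => /and4P[/eqP E1 /eqP E2 /eqP E3 /eqP E4].
  by rewrite E4K; apply: key2 nab npq E1 E2 E4 E3.
- move: Hu; rewrite !in_cons !in_nil !orbF !negb_or /= => /and3P[npq nab _].
  move: He; rewrite /block_dyadic /dyadic_perm /= => /and4P[/eqP E1 /eqP E2 /eqP E3 /eqP E4].
  by rewrite E4K'; apply: key2 nab npq E1 E4 E2 E3.
Qed.

Lemma P_sub : fK @: P \subset Scyc.
Proof.
apply/subsetP => s /imsetP [[[[h i] [u v]] x] Hz ->].
move: Hz; rewrite inE /= in_setT andbT inE /= => /and3P[hi uv /eqP Eq].
have nab : inl (h, x) != inl (i, (x + X h u + X i u)%R) :> T.
  by apply/eqP => -[hi' _]; rewrite hi' ltnn in hi.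
have npq : inr (u, (x + X h u)%R) != inr (v, (x + X h v)%R) :> T.
  by apply/eqP => -[uv' _]; rewrite uv' ltnn in uv.
have Hu : uniq ([:: inl (h, x); inr (u, (x + X h u)%R);
   inl (i, (x + X h u + X i u)%R); inr (v, (x + X h v)%R)] : seq T).
  by rewrite /= !in_cons !in_nil !orbF !negb_or /= nab npq.
have He : [&& e (inl (h, x)) (inr (u, (x + X h u)%R)),
   e (inr (u, (x + X h u)%R)) (inl (i, (x + X h u + X i u)%R)),
   e (inl (i, (x + X h u + X i u)%R)) (inr (v, (x + X h v)%R))
 & e (inr (v, (x + X h v)%R)) (inl (h, x))].
  rewrite /= /block_dyadic /dyadic_perm /= !eqxx addxxK eqxx /=.
  by rewrite -(addrA x) Eq addrA addxxK eqxx.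
have [Hc CE] := w4_cycle Hu He.
apply/imsetP; exists (w4 (inl (h, x)) (inr (u, (x + X h u)%R))
   (inl (i, (x + X h u + X i u)%R)) (inr (v, (x + X h v)%R))) => //.
by rewrite CE E4K.
Qed.

Lemma fK_inj : {in P &, injective fK}.
Proof.
move=> [[[h i] [u v]] x] [[[h' i'] [u' v']] x'].
rewrite !inE /= ?in_setT ?andbT => /and3P[hi uv _] /and3P[hi' uv' _] E.
have M c : (c \in \bigcup_(s in fK (((h, i), (u, v)), x)) s) =
           (c \in \bigcup_(s in fK (((h', i'), (u', v')), x')) s) by rewrite /= E.
have Ha := M (inl (h, x)); have Hb := M (inl (i, (x + X h u + X i u)%R)).
have Hp := M (inr (u, (x + X h u)%R)); have Hq := M (inr (v, (x + X h v)%R)).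
rewrite !memK !eqxx /= ?orbT in Ha Hb Hp Hq.
move/esym: Ha => /or3P[/eqP [= Eh Ex]|/eqP [= Eh Ex]|/eqP //];
move/esym: Hb => /or3P[/eqP [= Ei Ex2]|/eqP [= Ei Ex2]|/eqP //].
- by rewrite Eh -Ei ltnn in hi.
- move/esym: Hp => /orP[/eqP [= Eu Ey]|/eqP [= Eu Ey]];
  move/esym: Hq => /orP[/eqP [= Ev Ey2]|/eqP [= Ev Ey2]].
  + by rewrite Eu -Ev ltnn in uv.
  + by rewrite Eh Ei Eu Ev Ex.
  + by rewrite Eu Ev in uv; move: (ltn_trans uv' uv); rewrite ltnn.
  + by rewrite Eu -Ev ltnn in uv.
- by rewrite Eh Ei in hi; move: (ltn_trans hi' hi); rewrite ltnn.
- by rewrite Eh -Ei ltnn in hi.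
Qed.

Lemma card_Scyc : #|Scyc| = (#|Q| * 2 ^ l)%N.
Proof.
have -> : Scyc = fK @: P.
  by apply/eqP; rewrite eqEsubset Scyc_sub P_sub.
rewrite (card_in_imset fK_inj) cardsX cardsT card_mx card_Fp //.
by rewrite mul1n.
Qed.
End Tanner.


Lemma card_pairs n (A : {set 'I_n}) :
  #|[set uv : 'I_n * 'I_n | [&& uv.1 \in A, uv.2 \in A & uv.1 < uv.2]]| = 'C(#|A|, 2).
Proof.
rewrite -cards_draws.
set S := [set uv : 'I_n * 'I_n | _].
have inj :
 {in S &, injective (fun uv : 'I_n * 'I_n => [set uv.1; uv.2])}.
{ move=> [u v] [u' v']; rewrite !inE /= => /and3P[_ _ uv] /and3P[_ _ uv'] E.
  have Hu : u \in [set u'; v'] by rewrite -E !inE eqxx.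
  have Hv : v \in [set u'; v'] by rewrite -E !inE eqxx orbT.
  have Hu' : u' \in [set u; v] by rewrite E !inE eqxx.
  move: Hu Hv Hu'; rewrite !inE => /orP[/eqP Eu|/eqP Eu] /orP[/eqP Ev|/eqP Ev] /orP[/eqP Eu'|/eqP Eu'].
  all: subst => //.
  all: try by rewrite ltnn in uv.
  all: try by rewrite ltnn in uv'.
  all: by move: (ltn_trans uv uv'); rewrite ltnn. }
rewrite -(card_in_imset inj); apply: eq_card => B.
rewrite [in RHS]inE; apply/imsetP/idP.
- case=> [[u v]]; rewrite inE /= => /and3P[uA vA uv] ->.
  have nuv : u != v by apply/eqP => E; rewrite E ltnn in uv.
  rewrite cards2 nuv eqxx andbT.
  by apply/subsetP => w; rewrite !inE => /orP[] /eqP ->.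
- case/andP => sub /cards2P [u [v [nuv EB]]].
  have uA : u \in A by apply: (subsetP sub); rewrite EB !inE eqxx.
  have vA : v \in A by apply: (subsetP sub); rewrite EB !inE eqxx orbT.
  case: (ltngtP u v) => [uv|vu|/val_inj E]; last by rewrite E eqxx in nuv.
  + by exists (u, v) => //; rewrite inE /= uA vA uv.
  + by exists (v, u); [rewrite inE /= uA vA vu | rewrite EB /= setUC].
Qed.

Section Count.
Variables (l nc nv : nat) (X : 'I_nc -> 'I_nv -> 'rV['F_2]_l).

Definition Q2 (h i : 'I_nc) : {set 'I_nv * 'I_nv} :=
  [set uv : 'I_nv * 'I_nv | (uv.1 < uv.2) &&
     (X h uv.1 + X i uv.1 == X h uv.2 + X i uv.2)%R].

Lemma cardQ2 h i :
  #|Q2 h i| = \sum_(alpha : 'rV['F_2]_l) 'C(rho X h i alpha, 2).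
Proof.
rewrite -sum1_card.
rewrite (partition_big (fun uv : 'I_nv * 'I_nv => (X h uv.1 + X i uv.1)%R) xpredT) //=.
apply: eq_bigr => alpha _.
rewrite /rho -card_pairs -sum1_card.
apply: eq_bigl => [[u v]]; rewrite !inE /=.
case: (eqVneq (X h u + X i u)%R alpha) => [<-|ne]; rewrite ?andbT ?andbF /=.
  by rewrite andbC eq_sym.
by [].
Qed.

Lemma cardQ :
  #|Q X| = \sum_(h < nc) \sum_(i < nc | h < i)
               \sum_(alpha : 'rV['F_2]_l) 'C(rho X h i alpha, 2).
Proof.
transitivity (\sum_(h < nc) \sum_(i < nc | h < i) #|Q2 h i|); last first.
  by apply: eq_bigr => h _; apply: eq_bigr => i _; exact: cardQ2.
rewrite -sum1_card.
transitivity (\sum_(hi : 'I_nc * 'I_nc | hi.1 < hi.2)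
                 \sum_(uv : 'I_nv * 'I_nv | uv \in Q2 hi.1 hi.2) 1).
  rewrite (@pair_big_dep _ _ _ _ _ (fun hi : 'I_nc * 'I_nc => hi.1 < hi.2)
            (fun hi (uv : 'I_nv * 'I_nv) => uv \in Q2 hi.1 hi.2) (fun _ _ => 1)) /=.
  apply: eq_bigl => [[[h i] [u v]]]; rewrite !inE /=.
  by rewrite andbA.
rewrite (@pair_big_dep _ _ _ _ _ (xpredT) (fun h i : 'I_nc => h < i)
          (fun h i => #|Q2 h i|)) /=.
by apply: eq_bigr => hi _; rewrite sum1_card.
Qed.
End Count.


Section Girth.
Variables (l nc nv : nat) (X : 'I_nc -> 'I_nv -> 'rV['F_2]_l).
Local Notation V := 'rV['F_2]_l.
Local Notation T := (('I_nc * V) + ('I_nv * V))%type.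
Local Notation e := (tanner_adj (block_dyadic X)).

Definition side (x : T) : bool := if x is inl _ then true else false.

Lemma e_side (x y : T) : e x y -> side x != side y.
Proof. by case: x => [[? ?]|[? ?]]; case: y => [[? ?]|[? ?]]. Qed.

Lemma small_cycle k (w : {ffun 'I_k -> T}) : is_cycle e w -> 3 < k.
Proof.
case/and4P => k0 _ Hinj /forallP He.
case: k w k0 Hinj He => [|[|[|[|k]]]] w k0 Hinj He //.
- have := He ord0; have -> : ordS (ord0 : 'I_1) = ord0 by apply: val_inj.
  by move/e_side; rewrite eqxx.
- pose i0 : 'I_2 := @Ordinal 2 0 isT; pose i1 : 'I_2 := @Ordinal 2 1 isT.
  have E : cyc_edge w i0 = cyc_edge w i1.
    rewrite /cyc_edge (_ : ordS i0 = i1); last by apply: val_inj.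
    by rewrite (_ : ordS i1 = i0); [exact: setUC | apply: val_inj].
  by move: (injectiveP _ Hinj _ _ E).
- pose i0 : 'I_3 := @Ordinal 3 0 isT; pose i1 : 'I_3 := @Ordinal 3 1 isT.
  pose i2 : 'I_3 := @Ordinal 3 2 isT.
  have := He i0; have := He i1; have := He i2.
  rewrite (_ : ordS i0 = i1); last by apply: val_inj.
  rewrite (_ : ordS i1 = i2); last by apply: val_inj.
  rewrite (_ : ordS i2 = i0); last by apply: val_inj.
  move=> /e_side + /e_side + /e_side.
  by case: (side (w i0)); case: (side (w i1)); case: (side (w i2)).
Qed.

Lemma Scyc_card : #|Scyc X| = (#|Q X| * 2 ^ l)%N.
Proof. exact: card_Scyc. Qed.

Lemma girth_iff :
  girth_gt e 4 <->
  (forall h i : 'I_nc, h < i -> injective (fun u : 'I_nv => (X h u + X i u)%R)).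
Proof.
split.
- move=> G h i hi u v Euv; apply/eqP; case: (eqVneq u v) => // nuv; exfalso.
  have [z Hz] : exists z, z \in Q X.
    case: (ltngtP u v) => [uv|vu|/val_inj E]; last by rewrite E eqxx in nuv.
    + by exists ((h, i), (u, v)); rewrite inE /= hi uv Euv eqxx.
    + by exists ((h, i), (v, u)); rewrite inE /= hi vu Euv eqxx.
  have : 0 < #|Scyc X|.
    rewrite Scyc_card muln_gt0 expn_gt0 /= andbT.
    by apply/card_gt0P; exists z.
  case/card_gt0P => s /imsetP [w Hw _].
  by move: (G _ w Hw); rewrite ltnn.
- move=> Hinj k w Hw.
  have := small_cycle Hw; rewrite leq_eqVlt => /orP[/eqP Ek|//].
  subst k.
  have : cycle_edges w \in Scyc X by apply: imset_f.
  have : #|Scyc X| = 0.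
    rewrite Scyc_card; apply/eqP; rewrite muln_eq0; apply/orP; left.
    apply/eqP; apply: eq_card0 => [[[h i] [u v]]]; rewrite !inE /=.
    apply/negP => /and3P[hi uv /eqP E].
    by move: (Hinj _ _ hi _ _ E) uv => ->; rewrite ltnn.
  by move/eqP; rewrite cards_eq0 => /eqP ->; rewrite inE.
Qed.
End Girth.

Unset Implicit Arguments.

Theorem mainTheorem6 (l nc nv : nat) (X : 'I_nc -> 'I_nv -> 'rV['F_2]_l) :
  1 <= l -> 1 <= nc -> 1 <= nv ->
  num_cycles (tanner_adj (block_dyadic X)) 4 =
    (2 ^ l * \sum_(h < nc) \sum_(i < nc | h < i)
               \sum_(alpha : 'rV['F_2]_l) 'C(rho X h i alpha, 2))%N
  /\
  (girth_gt (tanner_adj (block_dyadic X)) 4 <->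
     (forall h i : 'I_nc, h < i -> injective (fun u : 'I_nv => (X h u + X i u)%R))).
Proof.
move=> _ _ _; split; last exact: girth_iff.
have -> : num_cycles (tanner_adj (block_dyadic X)) 4 = #|Scyc X| by [].
by rewrite card_Scyc cardQ mulnC.
Qed.
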